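(* Let $S=\{x_1,\dots,x_N\}$ be a spherical two-distance $2$-design (in its $n$-dimensional span), with inner products $a$ and $b$, and let $\Gamma_1$ be the graph on $\{1,\dots,N\}$ in which distinct $i,j$ are adjacent iff $\langle x_i,x_j\rangle=a$; assume $\Gamma_1$ is a strongly regular graph that is neither complete nor empty. Then the Gram matrix of $S$ coincides with the Gram matrix of $S_1(\Gamma_1)$, or with the Gram matrix of $S_2(\Gamma_1)$, or with the Gram matrix of a regular simplex of $N$ points in $\mathbb{R}^{N-1}$ (all off-diagonal entries equal to $-1/(N-1)$). In particular $S$ is, up to isometry, $S_1(\Gamma_1)$, $S_2(\Gamma_1)$, or a regular $(N-1)$-dimensional simplex.
   Context: A set of unit vectors $\{x_1,\dots,x_N\}$ spanning an $n$-dimensional real inner product space $V$ is a spherical $2$-design if $\sum_i x_i=0$ and $\sum_{i,j=1}^N\langle x_i,x_j\rangle^2=N^2/n$ (equivalently $\sum_i x_i=0$ and $\sum_i\langle x,x_i\rangle^2=\frac Nn\|x\|^2$ for all $x\in V$); it is two-distance if there are two reals $a\ne b$ such that $\langle x_i,x_j\rangle\in\{a,b\}$ for all $i\neq j$. A strongly regular graph is a regular graph in which any two adjacent vertices have a constant number $\lambda$ of common neighbours and any two nonadjacent vertices have a constant number $\mu$ of common neighbours. For such a graph $\Gamma_1$ on $N$ vertices, neither complete nor empty, with adjacency matrix $\Phi_1$, the orthogonal complement $\mathbf{1}^\perp\subset\mathbb{R}^N$ of the all-ones vector decomposes as an orthogonal sum of two eigenspaces $E_1,E_2$ of $\Phi_1$.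 $S_j(\Gamma_1)$ ($j=1,2$) is the set of $N$ vectors obtained by orthogonally projecting the standard basis vectors $e_1,\dots,e_N$ of $\mathbb{R}^N$ onto $E_j$ and normalizing each projection to unit length (vector $i$ coming from $e_i$). *)

(* Defs.v *)
(* Real scalars: an arbitrary real closed field R
   (the statement is first-order algebraic, so this covers the reals). *)
From HB Require Import structures.
From mathcomp Require Import all_boot all_order all_algebra.
Set Implicit Arguments. Unset Strict Implicit. Unset Printing Implicit Defensive.
Import Order.TTheory GRing.Theory Num.Theory.
Local Open Scope ring_scope.

Definition dotv (R : rcfType) (m : nat) (u v : 'rV[R]_m) : R := (u *m v^T) 0 0.
Definition normv (R : rcfType) (m : nat) (u : 'rV[R]_m) : R := Num.sqrt (dotv u u).
Definition normalize (R : rcfType) (m : nat) (u : 'rV[R]_m) : 'rV[R]_m :=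
  (normv u)^-1 *: u.

Definition gram_of (R : rcfType) (N m : nat) (x : 'I_N -> 'rV[R]_m) : 'M[R]_N :=
  \matrix_(i, j) dotv (x i) (x j).

(* The family S = {x_1..x_N} is given as the rows of X : 'M_(N,m); its span
   (the space V) has dimension n = \rank X. *)
Definition spherical_2design (R : rcfType) (N m : nat) (X : 'M[R]_(N, m)) : Prop :=
  [/\ (forall i, dotv (row i X) (row i X) = 1),
      \sum_(i < N) row i X = 0
    & \sum_(i < N) \sum_(j < N) (dotv (row i X) (row j X)) ^+ 2
        = (N%:R) ^+ 2 / (\rank X)%:R].

Definition two_distance (R : rcfType) (N m : nat) (X : 'M[R]_(N, m)) (a b : R) : Prop :=
  a != b /\ (forall i j : 'I_N, i != j ->
               dotv (row i X) (row j X) = a \/ dotv (row i X) (row j X) = b).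

Definition graph_of_ip (R : rcfType) (N m : nat) (X : 'M[R]_(N, m)) (a : R) : rel 'I_N :=
  fun i j => (i != j) && (dotv (row i X) (row j X) == a).

Definition strongly_regular (N : nat) (adj : rel 'I_N) : Prop :=
  [/\ (forall i j, adj i j = adj j i),
      (forall i, ~~ adj i i)
    & exists k lam mu : nat,
      [/\ (forall i, #|[set j | adj i j]| = k),
          (forall i j, adj i j -> #|[set h | adj i h && adj j h]| = lam)
        & (forall i j, i != j -> ~~ adj i j -> #|[set h | adj i h && adj j h]| = mu)]].

Definition complete_graph (N : nat) (adj : rel 'I_N) : Prop :=
  forall i j, i != j -> adj i j.
Definition empty_graph (N : nat) (adj : rel 'I_N) : Prop :=
  forall i j, ~~ adj i j.

Definition adjmx (R : rcfType) (N : nat) (adj : rel 'I_N) : 'M[R]_N :=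
  \matrix_(i, j) (adj i j)%:R.

(* E_theta = eigenspace of Phi for theta intersected with 1^perp
   (row space of the returned square matrix). The nonzero ones among these are
   exactly the two eigenspaces E_1, E_2 decomposing 1^perp. *)
Definition eigsp_perp1 (R : rcfType) (N : nat) (Phi : 'M[R]_N) (theta : R) : 'M[R]_N :=
  (kermx (Phi - theta%:M) :&: kermx (const_mx 1 : 'M[R]_(N, 1)))%MS.

Definition orthoproj (R : rcfType) (N : nat) (A : 'M[R]_N) : 'M[R]_N :=
  let B := row_base A in B^T *m invmx (B *m B^T) *m B.

(* S_theta(Gamma): normalized orthogonal projections of e_1..e_N onto E_theta. *)
Definition proj_frame (R : rcfType) (N : nat) (adj : rel 'I_N) (theta : R)
    : 'I_N -> 'rV[R]_N :=
  fun i => normalize (delta_mx 0 i *m orthoproj (eigsp_perp1 (adjmx R adj) theta)).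

(* Main.v *)
Require Import Defs.
From HB Require Import structures.
From mathcomp Require Import all_boot all_order all_algebra.
Import Order.TTheory GRing.Theory Num.Theory.
Local Open Scope ring_scope.
From mathcomp Require Import zify ring.
Set Implicit Arguments. Unset Strict Implicit.

Section Aux.
Variable R : rcfType.

Lemma mxtr_sq p q (Y : 'M[R]_(p,q)) i : (Y *m Y^T) i i = \sum_j Y i j ^+ 2.
Proof. by rewrite !mxE; apply: eq_bigr => j _; rewrite !mxE expr2. Qed.

Lemma mulmx_tr_eq0 p q (Y : 'M[R]_(p,q)) : Y *m Y^T = 0 -> Y = 0.
Proof.
move=> H; apply/matrixP => i j; rewrite mxE.
have := mxtr_sq Y i; rewrite H mxE => /esym E.
have := psumr_eq0P (P := predT) (fun j _ => sqr_ge0 (Y i j)) E (i:=j) isT.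
by move/eqP; rewrite sqrf_eq0 => /eqP.
Qed.

Lemma trace_tr_eq0 n (H : 'M[R]_n) : \tr (H *m H^T) = 0 -> H = 0.
Proof.
move=> E; apply: mulmx_tr_eq0; apply/matrixP => i j.
have Hi : forall i, \sum_j H i j ^+ 2 = 0.
  move=> i0; rewrite -mxtr_sq.
  have := psumr_eq0P (P := predT) (F := fun i => (H *m H^T) i i) _ E (i:=i0) isT.
  apply => k _; rewrite mxtr_sq; apply: sumr_ge0 => l _; exact: sqr_ge0.
suff -> : H = 0 by rewrite mul0mx.
apply/matrixP => k l; rewrite mxE.
have := psumr_eq0P (P := predT) (fun j _ => sqr_ge0 (H k j)) (Hi k) (i:=l) isT.
by move/eqP; rewrite sqrf_eq0 => /eqP.
Qed.

Lemma rank_mul_tr p q (X : 'M[R]_(p,q)) : \rank (X *m X^T) = \rank X.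
Proof.
apply/eqP; rewrite eqn_leq mxrankM_maxl /=.
set K := kermx (X *m X^T).
have KX : K *m X = 0.
  have KG : K *m (X *m X^T) = 0 by apply/eqP; rewrite -sub_kermx submx_refl.
  apply: mulmx_tr_eq0; rewrite trmx_mul !mulmxA -(mulmxA K) KG.
  by rewrite mul0mx.
have : (K <= kermx X)%MS by rewrite sub_kermx KX.
move/mxrankS; rewrite !mxrank_ker.
have := rank_leq_row X; have := rank_leq_row (X *m X^T).
move=> h1 h2 h3; lia.
Qed.

End Aux.

Section ProjG.
Variable R : rcfType.
Variables r N : nat.
Variable B : 'M[R]_(r, N).
Hypothesis Mu : B *m B^T \in unitmx.
Let P := B^T *m invmx (B *m B^T) *m B.

Lemma projG_tr : P^T = P.
Proof.
rewrite /P !trmx_mul trmxK trmx_inv.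
by rewrite !trmx_mul trmxK mulmxA.
Qed.

Lemma projG_idem : P *m P = P.
Proof.
rewrite /P -!mulmxA; congr (_ *m _).
by rewrite (mulmxA B) (mulmxA (B *m B^T)) mulmxV // mul1mx.
Qed.

Lemma projG_tr1 : \tr P = r%:R.
Proof.
by rewrite /P mxtrace_mulC mulmxA mulmxV // mxtrace1.
Qed.

Lemma projG_sub k (Y : 'M[R]_(k, N)) : (Y <= B)%MS -> Y *m P = Y.
Proof.
move=> sYB.
rewrite -(mulmxKpV sYB); move: (Y *m pinvmx B) => C.
by rewrite /P -!mulmxA (mulmxA B) (mulmxA (B *m B^T)) mulmxV // mul1mx.
Qed.
End ProjG.

Section Proj.
Variable R : rcfType.
Variable N : nat.
Variable A : 'M[R]_N.

Lemma M_unit : row_base A *m (row_base A)^T \in unitmx.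
Proof.
rewrite -row_free_unit /row_free rank_mul_tr.
exact: row_base_free.
Qed.

Lemma orthoproj_tr : (orthoproj A)^T = orthoproj A.
Proof. exact: projG_tr. Qed.

Lemma orthoproj_idem : orthoproj A *m orthoproj A = orthoproj A.
Proof. exact: (projG_idem M_unit). Qed.

Lemma orthoproj_tr1 : \tr (orthoproj A) = (\rank A)%:R.
Proof. exact: (projG_tr1 M_unit). Qed.

Lemma orthoproj_sub k (Y : 'M[R]_(k, N)) : (Y <= A)%MS -> Y *m orthoproj A = Y.
Proof.
move=> sYA; apply: (projG_sub M_unit).
by rewrite eq_row_base.
Qed.

End Proj.

Lemma trace_arg (R : rcfType) n (G P : 'M[R]_n) (t : R) (r : nat) :
  G^T = G -> P^T = P -> P *m P = P -> G *m P = G -> \tr G = t ->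
  \tr (G *m G) = t^+2 / r%:R -> \tr P = r%:R -> (0 < r)%N ->
  G = (t / r%:R) *: P.
Proof.
move=> GT PT PP GP trG trGG trP r0.
have PG : P *m G = G by rewrite -{1}PT -{1}GT -trmx_mul GP GT.
apply/eqP; rewrite -subr_eq0; apply/eqP; apply: trace_tr_eq0.
set c := t / r%:R.
rewrite [X in _ *m X]linearB /=.
rewrite [(c *: P)^T]linearZ /= GT PT.
rewrite mulmxBl !mulmxBr -!scalemxAl -!scalemxAr GP PG PP scalerA.
rewrite !linearB /= !linearZ /= trG trGG trP /c.
have rn : r%:R != 0 :> R by rewrite pnatr_eq0 -lt0n.
by field.
Qed.

Lemma dotv_row (R : rcfType) p q (A : 'M[R]_(p, q)) i j :
  dotv (row i A) (row j A) = (A *m A^T) i j.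
Proof. by rewrite /dotv !mxE; apply: eq_bigr => k _; rewrite !mxE. Qed.

Lemma dotvZ (R : rcfType) q (u v : 'rV[R]_q) s t :
  dotv (s *: u) (t *: v) = s * t * dotv u v.
Proof.
rewrite /dotv linearZ /= -scalemxAl -scalemxAr scalerA !mxE.
by rewrite mulrC (mulrC s).
Qed.

Lemma constJ (R : rcfType) N :
  (const_mx 1 : 'M[R]_N) = (const_mx 1 : 'M[R]_(N,1)) *m (const_mx 1 : 'M[R]_(1,N)).
Proof.
apply/matrixP => i j; rewrite !mxE big_ord1 !mxE mulr1 //.
Qed.

Unset Implicit Arguments. Set Strict Implicit.

Theorem theorem3p4 (R : rcfType) (N m : nat) (X : 'M[R]_(N, m)) (a b : R) :
  spherical_2design X ->
  two_distance X a b ->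
  strongly_regular (graph_of_ip X a) ->
  ~ complete_graph (graph_of_ip X a) ->
  ~ empty_graph (graph_of_ip X a) ->
  (exists theta : R,
      (0 < \rank (eigsp_perp1 (adjmx R (graph_of_ip X a)) theta))%N /\
      gram_of (fun i => row i X) = gram_of (proj_frame (graph_of_ip X a) theta))
  \/ (forall i j : 'I_N, i != j ->
        gram_of (fun k => row k X) i j = - ((N.-1)%:R)^-1).
Proof.
move=> [Hdiag Hsum Hdes] [ab Htd] _ Hnc _.
set G := X *m X^T.
have Gij : forall i j, G i j = dotv (row i X) (row j X) by move=> i j; rewrite dotv_row.
have gramX : gram_of (fun i => row i X) = G.
  by apply/matrixP => i j; rewrite mxE Gij.
have GT : G^T = G by rewrite /G trmx_mul trmxK.
have XT1 : X^T *m (const_mx 1 : 'M[R]_(N,1)) = 0.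
  apply/matrixP => k l; rewrite !mxE.
  transitivity ((\sum_i row i X) 0 k); last by rewrite Hsum mxE.
  by rewrite summxE; apply: eq_bigr => i _; rewrite !mxE mulr1.
have G1 : G *m (const_mx 1 : 'M[R]_(N,1)) = 0 by rewrite /G -mulmxA XT1 mulmx0.
have GJ : G *m (const_mx 1 : 'M[R]_N) = 0 by rewrite constJ mulmxA G1 mul0mx.
have trG : \tr G = N%:R.
  rewrite /mxtrace (eq_bigr (fun _ => 1)) ?sumr_const ?card_ord // => i _.
  by rewrite Gij Hdiag.
set r := \rank X.
have trGG : \tr (G *m G) = N%:R ^+ 2 / r%:R.
  rewrite -Hdes /mxtrace; apply: eq_bigr => i _; rewrite !mxE.
  apply: eq_bigr => j _; rewrite -Gij expr2; congr (_ * _).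
  by rewrite -{1}GT mxE.
have rG : \rank G = r by rewrite rank_mul_tr.
have [i0 _] : exists i : 'I_N, True.
  case: (pickP (@predT 'I_N)) => [i0 _|h]; first by exists i0.
  by exfalso; apply: Hnc => i; have := h i.
have r0 : (0 < r)%N.
  rewrite -rG lt0n mxrank_eq0; apply/eqP => /matrixP /(_ i0 i0).
  by rewrite Gij Hdiag mxE; apply/eqP; rewrite oner_eq0.
set c := N%:R / r%:R : R.
have c0 : 0 < c.
  rewrite /c divr_gt0 // ltr0n //.
  by case: (N) i0 => [[]|].
have GPG := trace_arg GT (orthoproj_tr G) (orthoproj_idem G)
   (orthoproj_sub (submx_refl G)) trG trGG (etrans (orthoproj_tr1 G) (congr1 _ rG)) r0.
have GG : G *m G = c *: G.
  by rewrite {2}GPG -scalemxAr orthoproj_sub ?submx_refl.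
set Adj := adjmx R (graph_of_ip X a).
have Gdec : G = (1 - b)%:M + (a - b) *: Adj + b *: const_mx 1.
  apply/matrixP => i j; rewrite Gij !mxE /graph_of_ip.
  have [->|nij] := eqVneq i j.
    by rewrite Hdiag /= mulr1n mulr0 addr0 mulr1 subrK.
  rewrite /= mulr0n add0r mulr1.
  have [ea|nea] := eqVneq (dotv (row i X) (row j X)) a.
    by rewrite ea /= mulr1 subrK.
  case: (Htd i j nij) => e; first by rewrite e eqxx in nea.
  by rewrite /= mulr0 add0r e.
set theta := (c - 1 + b) / (a - b).
set E := eigsp_perp1 Adj theta.
have abn : a - b != 0 by rewrite subr_eq0.
have Adj' : (a - b) *: Adj = G - (1 - b)%:M - b *: const_mx 1.
  by rewrite Gdec; apply/matrixP => i j; rewrite !mxE; ring.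
have GA : G *m (Adj - theta%:M) = 0.
  apply/eqP; have := scalemx_eq0 (a - b) (G *m (Adj - theta%:M)).
  rewrite (negbTE abn) /= => <-; apply/eqP.
  rewrite scalemxAr scalerBr Adj' scale_scalar_mx !mulmxBr -scalemxAr GJ GG scaler0 subr0.
  rewrite !mul_mx_scalar; apply/matrixP => i j; rewrite !mxE /theta.
  by field.
have GE : (G <= E)%MS.
  by rewrite sub_capmx !sub_kermx GA G1 !eqxx.
have EA : E *m (Adj - theta%:M) = 0.
  by apply/eqP; rewrite -sub_kermx (submx_trans (capmxSl _ _)) ?submx_refl.
have E1 : E *m (const_mx 1 : 'M[R]_(N,1)) = 0.
  by apply/eqP; rewrite -sub_kermx capmxSr.
have EG : E *m G = c *: E.
  have EAdj : E *m Adj = theta *: E.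
    by apply/eqP; rewrite -subr_eq0 -mul_mx_scalar -mulmxBr EA.
  rewrite Gdec !mulmxDr -!scalemxAr EAdj constJ mulmxA E1 mul0mx scaler0 addr0.
  rewrite mul_mx_scalar scalerA -scalerDl; congr (_ *: _).
  by rewrite /theta; field.
have EsG : (E <= G)%MS.
  have -> : E = c^-1 *: (E *m G) by rewrite EG scalerA mulVf ?scale1r // gt_eqF.
  by rewrite scalemx_sub ?submxMl.
have rE : \rank E = r by rewrite -rG; apply/eqP; rewrite eqn_leq !mxrankS.
have GPE := trace_arg GT (orthoproj_tr E) (orthoproj_idem E)
   (orthoproj_sub GE) trG trGG (etrans (orthoproj_tr1 E) (congr1 _ rE)) r0.
left; exists theta; split; first by rewrite -/E rE.
set P := orthoproj E in GPE *.
have PPT : P *m P^T = P by rewrite /P orthoproj_tr orthoproj_idem.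
have Pii : forall i, P i i = c^-1.
  move=> i; have := congr1 (fun M : 'M[R]_N => M i i) GPE.
  rewrite /= Gij Hdiag mxE -/c => h.
  by rewrite -[P i i](mulKf (lt0r_neq0 c0)) -h mulr1.
rewrite gramX; apply/matrixP => i j; rewrite Gij /gram_of mxE /proj_frame -/Adj -/E -/P.
rewrite /normalize -!rowE dotvZ /normv !dotv_row PPT !Pii -/G GPE mxE -/c; congr (_ * _).
rewrite -invfM -expr2 sqr_sqrtr ?invr_ge0 ?ltW // invrK.
by [].
Qed.
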